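(* Let $(x_n,y_n)_{n\in\mathbb Z}$ and $(x'_n,y'_n)_{n\in\mathbb Z}$ be two elliptic sequences in general position on the same biquadratic polynomial $F$. For integers $m\ge1$, $r,s$, let $Q_{m,r,s}(y)=\dfrac{(y-y_r)\cdots(y-y_{r+m-1})}{(y-y'_s)\cdots(y-y'_{s+m-1})}$. Then there exist a constant $C^\dagger_{m,r,s}$ and a polynomial $D^\dagger_{m,r,s}$ of degree at most $2$ such that, as rational functions of $x$, $$\mathcal D^\dagger Q_{m,r,s}(x)=C^\dagger_{m,r,s}X_2(x)\frac{(x-x_{r+1})\cdots(x-x_{r+m-1})}{(x-x'_s)(x-x'_{s+1})\cdots(x-x'_{s+m})},\qquad \mathcal M^\dagger Q_{m,r,s}(x)=D^\dagger_{m,r,s}(x)\frac{(x-x_{r+1})\cdots(x-x_{r+m-1})}{(x-x'_s)\cdots(x-x'_{s+m})}.$$ Moreover $C^\dagger_{1,r,s}=\dfrac{y'_s-y_r}{Y_2(y'_s)}$ and $D^\dagger_{1,r,s}(x)=\dfrac{X_0(x)+(y_r+y'_s)X_1(x)/2+y_ry'_sX_2(x)}{Y_2(y'_s)}$.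
   Context: $F(x,y)=\sum_{i,j=0}^2c_{i,j}x^iy^j=Y_0(y)+xY_1(y)+x^2Y_2(y)=X_0(x)+yX_1(x)+y^2X_2(x)$. An elliptic sequence on $F$ is $(x_n,y_n)_{n\in\mathbb Z}$ such that for every $n$, $x_n,x_{n+1}$ are the two roots of $F(\cdot,y_n)$ and $y_{n-1},y_n$ the two roots of $F(x_n,\cdot)$; general position: all $x_n,x'_n$ distinct, all $y_n,y'_n$ distinct, $X_2,Y_2$ nonvanishing there. For a rational function $g$ of $y$ and a value $x$ with $y^\pm$ the two roots of $F(x,y)=0$: $(\mathcal D^\dagger g)(x)=-\frac{g(y^+)-g(y^-)}{y^+-y^-}$, $(\mathcal M^\dagger g)(x)=\frac{g(y^+)+g(y^-)}2$; on the lattice $(\mathcal D^\dagger g)(x_n)=-\frac{g(y_n)-g(y_{n-1})}{y_n-y_{n-1}}$, $(\mathcal M^\dagger g)(x_n)=\frac{g(y_n)+g(y_{n-1})}2$. Empty products equal $1$. *)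

(* Defs.v *)
From HB Require Import structures.
From mathcomp Require Import all_boot all_order all_algebra.
Set Implicit Arguments. Unset Strict Implicit. Unset Printing Implicit Defensive.
Import Order.TTheory GRing.Theory Num.Theory.
Local Open Scope ring_scope.

Section Biquadratic.
Variable R : numClosedFieldType.

Definition bqF (c : 'I_3 -> 'I_3 -> R) (x y : R) : R :=
  \sum_(i < 3) \sum_(j < 3) c i j * x ^+ i * y ^+ j.

(* F = X_0(x) + y X_1(x) + y^2 X_2(x) : X_k = sum_i c_{i,k} x^i *)
Definition Xpol (c : 'I_3 -> 'I_3 -> R) (k : 'I_3) : {poly R} :=
  \poly_(i < 3) c (inord i) k.
(* F = Y_0(y) + x Y_1(y) + x^2 Y_2(y) : Y_k = sum_j c_{k,j} y^j *)
Definition Ypol (c : 'I_3 -> 'I_3 -> R) (k : 'I_3) : {poly R} :=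
  \poly_(j < 3) c k (inord j).

Definition i0 : 'I_3 := inord 0.
Definition i1 : 'I_3 := inord 1.
Definition i2 : 'I_3 := inord 2.

(* elliptic sequence: x_n, x_{n+1} are the two roots of F(., y_n), and
   y_{n-1}, y_n are the two roots of F(x_n, .) (as quadratic polynomials) *)
Definition elliptic_seq (c : 'I_3 -> 'I_3 -> R) (x y : int -> R) : Prop :=
  forall n : int,
    (forall t, bqF c t (y n) = (Ypol c i2).[y n] * (t - x n) * (t - x (n + 1))) /\
    (forall u, bqF c (x n) u = (Xpol c i2).[x n] * (u - y (n - 1)) * (u - y n)).

Definition general_position (c : 'I_3 -> 'I_3 -> R) (x y x' y' : int -> R) : Prop :=
  (forall n k, x n = x k -> n = k) /\ (forall n k, x' n = x' k -> n = k) /\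
  (forall n k, x n <> x' k) /\
  (forall n k, y n = y k -> n = k) /\ (forall n k, y' n = y' k -> n = k) /\
  (forall n k, y n <> y' k) /\
  (forall n, [/\ (Xpol c i2).[x n] != 0, (Xpol c i2).[x' n] != 0,
                (Ypol c i2).[y n] != 0 & (Ypol c i2).[y' n] != 0]).

Definition Qmrs (y y' : int -> R) (m : nat) (r s : int) (u : R) : R :=
  (\prod_(i < m) (u - y (r + i%:Z))) / (\prod_(i < m) (u - y' (s + i%:Z))).

(* D^dagger g and M^dagger g at a point whose two y-roots are yp, ym *)
Definition Ddag (g : R -> R) (yp ym : R) : R := - ((g yp - g ym) / (yp - ym)).
Definition Mdag (g : R -> R) (yp ym : R) : R := (g yp + g ym) / 2.

Definition ratfac (x x' : int -> R) (m : nat) (r s : int) (t : R) : R :=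
  (\prod_(1 <= i < m) (t - x (r + i%:Z))) / (\prod_(j < m.+1) (t - x' (s + j%:Z))).

End Biquadratic.

(* Main.v *)
Require Import Defs.
From HB Require Import structures.
From mathcomp Require Import all_boot all_order all_algebra.
From mathcomp Require Import ring zify.
Import Order.TTheory GRing.Theory Num.Theory.
Local Open Scope ring_scope.

Lemma sum3 (V : nmodType) (f : 'I_3 -> V) : \sum_(i<3) f i = f i0 + f i1 + f i2.
Proof.
rewrite !big_ord_recr big_ord0 /=. rewrite add0r.
by congr (_ + _ + _); congr f; apply: val_inj; rewrite /= inordK.
Qed.

Lemma hornerXpol (R : numClosedFieldType) (c : 'I_3 -> 'I_3 -> R) k t :
  (Xpol c k).[t] = c i0 k + c i1 k * t + c i2 k * t^+2.
Proof.
rewrite /Xpol horner_poly sum3 /i0 /i1 /i2 !inord_val !inordK //.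
by rewrite expr0 expr1 mulr1.
Qed.

Lemma bqF_expand (R : numClosedFieldType) (c : 'I_3 -> 'I_3 -> R) t u :
  bqF c t u = (Xpol c i0).[t] + (Xpol c i1).[t] * u + (Xpol c i2).[t] * u^+2.
Proof.
rewrite /bqF !sum3 !hornerXpol /i0 /i1 /i2 !inordK //.
rewrite !expr0 !expr1; ring.
Qed.

Lemma int_pred (r : int) (i : nat) : (0 < i)%N -> r + i%:Z - 1 = r + (i.-1)%:Z.
Proof. move=> h; lia. Qed.
Lemma int_succ (r : int) (i : nat) : r + i%:Z + 1 = r + (i.+1)%:Z.
Proof. lia. Qed.
Lemma pf (R : fieldType) (b a : nat -> R) m :
  (forall i j, (i < m)%N -> (j < m)%N -> a i = a j -> i = j) ->
  exists A : nat -> R, forall u, (forall j, (j < m)%N -> u != a j) ->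
   (\prod_(i<m) (u - b i)) / (\prod_(i<m) (u - a i)) = 1 + \sum_(j<m) A j / (u - a j).
Proof.
elim: m => [|m IH] inj.
  by exists (fun _ => 0) => u _; rewrite !big_ord0 divr1 addr0.
have [A HA] := IH (fun i j hi hj => inj i j (leqW hi) (leqW hj)).
exists (fun j => if (j < m)%N then A j * (1 + (a m - b m) / (a j - a m))
         else (a m - b m) * (1 - \sum_(j<m) A j / (a j - a m))).
move=> u hu.
rewrite !big_ord_recr /= ltnn.
have -> : \sum_(j<m) (if (j < m)%N then A j * (1 + (a m - b m) / (a j - a m))
         else (a m - b m) * (1 - \sum_(j<m) A j / (a j - a m))) / (u - a j)
   = \sum_(j<m) A j * (1 + (a m - b m) / (a j - a m)) / (u - a j).
  by apply eq_bigr => j _; rewrite ltn_ord.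
rewrite invfM mulrACA HA; last by move=> j hj; apply hu; apply: leqW.
have nz1 : forall j, (j < m)%N -> u - a j != 0.
  by move=> j hj; rewrite subr_eq0; apply hu; apply: leqW.
have nz2 : forall j, (j < m)%N -> a j - a m != 0.
  move=> j hj; rewrite subr_eq0; apply/eqP => h.
  by have := inj j m (leqW hj) (leqnn _) h => e; rewrite e ltnn in hj.
have nz3 : u - a m != 0 by rewrite subr_eq0; apply hu.
have e1 : \sum_(j<m) A j * (1 + (a m - b m) / (a j - a m)) / (u - a j)
   = \sum_(j<m) A j / (u - a j) + (a m - b m) * \sum_(j<m) A j / ((a j - a m) * (u - a j)).
  rewrite mulr_sumr -big_split; apply eq_bigr => j _ /=.
  by have h1 := nz1 j (ltn_ord j); have h2 := nz2 j (ltn_ord j); field; rewrite ?h1 ?h2 ?nz3.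
have e2 : \sum_(j<m) A j / ((a j - a m) * (u - a j))
   = (\sum_(j<m) A j / (u - a j) + \sum_(j<m) A j / (a j - a m)) / (u - a m).
  rewrite -big_split mulr_suml; apply eq_bigr => j _ /=.
  by have h1 := nz1 j (ltn_ord j); have h2 := nz2 j (ltn_ord j); field; rewrite ?h1 ?h2 ?nz3.
rewrite e1 e2; field; exact: nz3.
Qed.
Lemma prod_split2 (T : comNzRingType) (F : nat -> T) m j : (j < m)%N ->
  \prod_(k < m.+1) F k =
  F j * F j.+1 * \prod_(k < m.+1 | ((k : nat) != j) && ((k : nat) != j.+1)) F k.
Proof.
move=> hj.
have h0 : (j < m.+1)%N by apply: leqW.
have h1 : (j.+1 < m.+1)%N by rewrite ltnS.
rewrite (bigD1 (Ordinal h0)) //= (bigD1 (Ordinal h1)) /=; last first.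
  by rewrite -val_eqE /= gtn_eqF.
rewrite mulrA; congr (_ * _); apply: eq_bigl => k; rewrite andTb -!val_eqE /=.
Qed.

Definition Pj {R : numClosedFieldType} (xp : nat -> R) (m j : nat) : {poly R} :=
  \prod_(k < m.+1 | ((k : nat) != j) && ((k : nat) != j.+1)) ('X - (xp k)%:P).
Definition PiP {R : numClosedFieldType} (xp : nat -> R) (m : nat) : {poly R} :=
  \prod_(k < m.+1) ('X - (xp k)%:P).
Definition Npoly {R : numClosedFieldType} (c : 'I_3 -> 'I_3 -> R) (xp a A : nat -> R) m :=
  \sum_(j < m) (A j / (Ypol c i2).[a j]) *: Pj xp m j.
Definition Mpoly {R : numClosedFieldType} (c : 'I_3 -> 'I_3 -> R) (xp a A : nat -> R) m :=
  PiP xp m + \sum_(j < m) (A j / (2 * (Ypol c i2).[a j])) *: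
     ((- Xpol c i1 - (2 * a j) *: Xpol c i2) * Pj xp m j).

Lemma roots_rel {R : numClosedFieldType} (c : 'I_3 -> 'I_3 -> R) t yp ym :
  (forall u, bqF c t u = (Xpol c i2).[t] * (u - yp) * (u - ym)) ->
  (Xpol c i1).[t] = - (Xpol c i2).[t] * (yp + ym) /\
  (Xpol c i0).[t] = (Xpol c i2).[t] * yp * ym.
Proof.
move=> hB; have e0 := hB 0; have e1 := hB 1; rewrite !bqF_expand in e0 e1.
split.
  have -> : (Xpol c i1).[t] = ((Xpol c i0).[t] + (Xpol c i1).[t] * 1 + (Xpol c i2).[t] * 1 ^+ 2)
     - ((Xpol c i0).[t] + (Xpol c i1).[t] * 0 + (Xpol c i2).[t] * 0 ^+ 2) - (Xpol c i2).[t] by ring.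
  rewrite e0 e1; ring.
have -> : (Xpol c i0).[t] = ((Xpol c i0).[t] + (Xpol c i1).[t] * 0 + (Xpol c i2).[t] * 0 ^+ 2) by ring.
rewrite e0; ring.
Qed.

Lemma dm (R : numClosedFieldType) (c : 'I_3 -> 'I_3 -> R) (xp a A : nat -> R) m
    (g : R -> R) t yp ym :
  (forall u, (forall j, (j < m)%N -> u != a j) -> g u = 1 + \sum_(j<m) A j / (u - a j)) ->
  (forall j, (j < m)%N -> (Ypol c i2).[a j] != 0) ->
  (forall j, (j < m)%N -> bqF c t (a j) = (Ypol c i2).[a j] * (t - xp j) * (t - xp j.+1)) ->
  (Xpol c i2).[t] != 0 -> yp != ym ->
  (forall u, bqF c t u = (Xpol c i2).[t] * (u - yp) * (u - ym)) ->
  (forall k, (k <= m)%N -> t != xp k) ->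
  Ddag g yp ym = (Xpol c i2).[t] * (Npoly c xp a A m).[t] / (\prod_(k < m.+1) (t - xp k)) /\
  Mdag g yp ym = (Mpoly c xp a A m).[t] / (\prod_(k < m.+1) (t - xp k)).
Proof.
move=> hg hY hF hX hne hB hx.
have [hX1 _] := @roots_rel _ c t yp ym hB.
have hab j : (j < m)%N -> (yp - a j) * (ym - a j) * (Xpol c i2).[t] =
     (Ypol c i2).[a j] * (t - xp j) * (t - xp j.+1).
  by move=> hj; rewrite -hF // hB; ring.
have hxk k : (k <= m)%N -> t - xp k != 0 by move=> hk; rewrite subr_eq0 hx.
have hPi : \prod_(k < m.+1) (t - xp k) != 0.
  by apply/prodf_neq0 => k _; apply: hxk; rewrite -ltnS.
have hRj j : (j < m)%N -> (Ypol c i2).[a j] * (t - xp j) * (t - xp j.+1) != 0.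
  move=> hj; rewrite !mulf_neq0 ?hY ?hxk //; exact: ltnW.
have hya j : (j < m)%N -> (yp - a j != 0) /\ (ym - a j != 0).
  move=> hj; have := hRj j hj; rewrite -hab // !mulf_eq0 !negb_or.
  by case/andP => /andP [-> ->].
have hPjt j : (Pj xp m j).[t] =
    \prod_(k < m.+1 | ((k : nat) != j) && ((k : nat) != j.+1)) (t - xp k).
  by rewrite /Pj horner_prod; apply: eq_bigr => k _; rewrite hornerXsubC.
have hsplit j : (j < m)%N -> \prod_(k < m.+1) (t - xp k) =
    (t - xp j) * (t - xp j.+1) * (Pj xp m j).[t].
  by move=> hj; rewrite hPjt (@prod_split2 _ (fun k => t - xp k) m j hj).
have hPnz j : (j < m)%N -> (Pj xp m j).[t] != 0.
  by move=> hj; move: hPi; rewrite (hsplit j hj) !mulf_eq0 !negb_or => /andP [_ ->].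
have hE j : (j < m)%N -> (t - xp j) * (t - xp j.+1) =
    (yp - a j) * (ym - a j) * (Xpol c i2).[t] / (Ypol c i2).[a j].
  by move=> hj; rewrite hab //; field; rewrite hY.
have hgu (u : R) : (u = yp \/ u = ym) -> g u = 1 + \sum_(j<m) A j / (u - a j).
  move=> hu; apply: hg => j hj; rewrite -subr_eq0.
  by have [h1 h2] := hya j hj; case: hu => ->.
have hypm : yp - ym != 0 by rewrite subr_eq0.
have h2 : (2 : R) != 0 by rewrite pnatr_eq0.
split.
  rewrite /Ddag (hgu yp) ?(hgu ym); try by [left | right].
  have -> : (1 + \sum_(j < m) A j / (yp - a j)) - (1 + \sum_(j < m) A j / (ym - a j))
     = \sum_(j < m) A j / (yp - a j) - \sum_(j < m) A j / (ym - a j) by ring.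
  rewrite -sumrB mulr_suml -sumrN /Npoly horner_sum mulr_sumr mulr_suml.
  apply: eq_bigr => j _; rewrite hornerZ (hsplit j (ltn_ord j)) (hE j (ltn_ord j)).
  have [h3 h4] := hya j (ltn_ord j); have h5 := hPnz j (ltn_ord j);
  have h6 := hY j (ltn_ord j).
  by field; rewrite ?h3 ?h4 ?h5 ?h6 ?hX ?hypm.
rewrite /Mdag (hgu yp) ?(hgu ym); try by [left | right].
have -> : ((1 + \sum_(j < m) A j / (yp - a j)) + (1 + \sum_(j < m) A j / (ym - a j))) / 2
   = 1 + (\sum_(j < m) A j / (yp - a j) + \sum_(j < m) A j / (ym - a j)) / 2.
  by field.
have hPiP : (PiP xp m).[t] = \prod_(k < m.+1) (t - xp k).
  by rewrite /PiP horner_prod; apply: eq_bigr => k _; rewrite hornerXsubC.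
rewrite /Mpoly hornerD horner_sum hPiP.
rewrite [RHS]mulrDl divff //; congr (1 + _).
have -> : (\sum_(j < m) A j / (yp - a j) + \sum_(j < m) A j / (ym - a j)) / 2
   = \sum_(j < m) (A j / (yp - a j) + A j / (ym - a j)) / 2.
  by rewrite -mulr_suml big_split.
rewrite mulr_suml; apply: eq_bigr => j _.
rewrite !hornerE /= hX1.
rewrite (hsplit j (ltn_ord j)) (hE j (ltn_ord j)).
have [h3 h4] := hya j (ltn_ord j); have h5 := hPnz j (ltn_ord j);
have h6 := hY j (ltn_ord j).
by field; rewrite ?h3 ?h4 ?h5 ?h6 ?hX ?h2.
Qed.

Lemma size_PiP {R : numClosedFieldType} (xp : nat -> R) m : size (PiP xp m) = m.+2.
Proof.
rewrite /PiP -(big_mkord xpredT (fun k => 'X - (xp k)%:P)) size_prod_XsubC.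
by rewrite /index_iota subn0 size_iota.
Qed.

Lemma size_Pj {R : numClosedFieldType} (xp : nat -> R) m j : (j < m)%N ->
  size (Pj xp m j) = m.
Proof.
move=> hj; have := size_PiP xp m.
rewrite /PiP (@prod_split2 _ (fun k => 'X - (xp k)%:P) m j hj) -/(Pj xp m j).
have hq : ('X - (xp j)%:P) * ('X - (xp j.+1)%:P) != 0.
  by rewrite mulf_neq0 ?polyXsubC_eq0.
have [->|hP] := eqVneq (Pj xp m j) 0; first by rewrite mulr0 size_poly0.
have s2 : forall z : R, size ('X - z%:P) = 2%N by move=> z; rewrite size_XsubC.
rewrite size_mul // size_mul ?polyXsubC_eq0 // !s2.
move=> h; change (((2+2).-1 + size (Pj xp m j)).-1 = m.+2)%N in h; lia.
Qed.

Lemma factor_roots (R : fieldType) (p : {poly R}) (rs : seq R) k :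
  uniq rs -> all (root p) rs -> (size p <= size rs + k)%N ->
  exists q : {poly R}, (size q <= k)%N /\ p = q * \prod_(z <- rs) ('X - z%:P).
Proof.
move=> hu hr hs.
have [q hq] : exists q, p = q * \prod_(z <- rs) ('X - z%:P).
  by apply: uniq_roots_prod_XsubC => //; rewrite uniq_rootsE.
exists q; split => //.
have [->|q0] := eqVneq q 0; first by rewrite size_poly0.
move: hs; rewrite hq size_mul // ?size_prod_XsubC; last first.
  by rewrite monic_neq0 // monic_prod_XsubC.
by rewrite addnS /= addnC leq_add2l.
Qed.

Lemma size_Npoly {R : numClosedFieldType} c (xp a A : nat -> R) m :
  (size (Npoly c xp a A m) <= m)%N.
Proof.
rewrite /Npoly; apply: (big_ind (fun p : {poly R} => size p <= m)%N).
- by rewrite size_poly0.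
- by move=> p q hp hq; rewrite (leq_trans (size_polyD _ _)) // geq_max hp hq.
- by move=> j _; rewrite (leq_trans (size_scale_leq _ _)) // size_Pj.
Qed.

Lemma size_Xpol {R : numClosedFieldType} (c : 'I_3 -> 'I_3 -> R) k :
  (size (Xpol c k) <= 3)%N.
Proof. exact: size_poly. Qed.

Lemma size_Mpoly {R : numClosedFieldType} c (xp a A : nat -> R) m :
  (size (Mpoly c xp a A m) <= m.+2)%N.
Proof.
rewrite /Mpoly (leq_trans (size_polyD _ _)) // geq_max size_PiP leqnn /=.
apply: (big_ind (fun p : {poly R} => size p <= m.+2)%N).
- by rewrite size_poly0.
- by move=> p q hp hq; rewrite (leq_trans (size_polyD _ _)) // geq_max hp hq.
- move=> j _; rewrite (leq_trans (size_scale_leq _ _)) //.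
  rewrite (leq_trans (size_polyMleq _ _)) // size_Pj //.
  have : (size ((- Xpol c i1 - (2 * a j) *: Xpol c i2)%R) <= 3)%N.
    rewrite (leq_trans (size_polyD _ _)) // geq_max size_polyN size_Xpol.
    by rewrite size_polyN (leq_trans (size_scale_leq _ _)) // size_Xpol.
  move=> h; apply: (@leq_trans (3 + m).-1); last by [].
  by rewrite -!subn1 leq_sub2r // leq_add2r.
Qed.

Theorem mainTheorem15 (R : numClosedFieldType) (c : 'I_3 -> 'I_3 -> R)
    (x y x' y' : int -> R) :
  elliptic_seq c x y -> elliptic_seq c x' y' ->
  general_position c x y x' y' ->
  forall (m : nat) (r s : int), (0 < m)%N ->
  exists (C : R) (D : {poly R}),
    [/\ (size D <= 3)%N,
        (forall (t yp ym : R),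
           (Xpol c i2).[t] != 0 -> yp != ym ->
           (forall u, bqF c t u = (Xpol c i2).[t] * (u - yp) * (u - ym)) ->
           (forall j : nat, (j <= m)%N -> t != x' (s + j%:Z)) ->
           Ddag (Qmrs y y' m r s) yp ym = C * (Xpol c i2).[t] * ratfac x x' m r s t /\
           Mdag (Qmrs y y' m r s) yp ym = D.[t] * ratfac x x' m r s t) &
        (m = 1%N ->
           C = (y' s - y r) / (Ypol c i2).[y' s] /\
           D = ((Ypol c i2).[y' s])^-1 *:
                 (Xpol c i0 + ((y r + y' s) / 2) *: Xpol c i1
                  + (y r * y' s) *: Xpol c i2))]
  .
Proof.
move=> hE hE' [xinj [x'inj [xx' [yinj [y'inj [yy' hgp]]]]]] m r s hm.
have ainj : forall i j, (i < m)%N -> (j < m)%N ->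
    (fun j => y' (s + j%:Z)) i = (fun j => y' (s + j%:Z)) j -> i = j.
  by move=> i j _ _ /= /y'inj /addrI [].
have [A hA] := @pf _ (fun i => y (r + i%:Z)) _ m ainj.
have hg : forall u, (forall j, (j < m)%N -> u != y' (s + j%:Z)) ->
    Qmrs y y' m r s u = 1 + \sum_(j < m) A j / (u - y' (s + j%:Z)).
  exact: hA.
have hY : forall j, (j < m)%N -> (Ypol c i2).[y' (s + j%:Z)] != 0.
  by move=> j _; have [] := hgp (s + j%:Z).
have hF : forall t j, (j < m)%N -> bqF c t (y' (s + j%:Z)) =
    (Ypol c i2).[y' (s + j%:Z)] * (t - x' (s + j%:Z)) * (t - x' (s + j.+1%:Z)).
  by move=> t j _; have [h _] := hE' (s + j%:Z); rewrite h int_succ.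
pose N := Npoly c (fun k => x' (s + k%:Z)) (fun j => y' (s + j%:Z)) A m.
pose M := Mpoly c (fun k => x' (s + k%:Z)) (fun j => y' (s + j%:Z)) A m.
have DM : forall t yp ym, (Xpol c i2).[t] != 0 -> yp != ym ->
    (forall u, bqF c t u = (Xpol c i2).[t] * (u - yp) * (u - ym)) ->
    (forall k, (k <= m)%N -> t != x' (s + k%:Z)) ->
    Ddag (Qmrs y y' m r s) yp ym =
      (Xpol c i2).[t] * N.[t] / (\prod_(k < m.+1) (t - x' (s + k%:Z))) /\
    Mdag (Qmrs y y' m r s) yp ym = M.[t] / (\prod_(k < m.+1) (t - x' (s + k%:Z))).
  by move=> t yp ym hX hne hB hx; exact: (@dm _ c _ _ A m _ t yp ym hg hY (hF t) hX hne hB hx).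
have hPi : forall t, (forall k, (k <= m)%N -> t != x' (s + k%:Z)) ->
    \prod_(k < m.+1) (t - x' (s + k%:Z)) != 0.
  move=> t hx; apply/prodf_neq0 => k _; rewrite subr_eq0 hx //.
  by rewrite -ltnS.
have hroot : forall i, (0 < i)%N -> (i < m)%N ->
    N.[x (r + i%:Z)] = 0 /\ M.[x (r + i%:Z)] = 0.
  move=> i h0 hi.
  have hB : forall u, bqF c (x (r + i%:Z)) u = (Xpol c i2).[x (r + i%:Z)] *
      (u - y (r + (i.-1)%:Z)) * (u - y (r + i%:Z)).
    by move=> u; have [_ h] := hE (r + i%:Z); rewrite h int_pred.
  have [hX _ _ _] := hgp (r + i%:Z).
  have hne : y (r + (i.-1)%:Z) != y (r + i%:Z).
    by apply/eqP => /yinj /addrI [] h; lia.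
  have hx : forall k, (k <= m)%N -> x (r + i%:Z) != x' (s + k%:Z).
    by move=> k _; apply/eqP; exact: xx'.
  have [d1 d2] := DM _ _ _ hX hne hB hx.
  have q0 : forall k, (k < m)%N -> Qmrs y y' m r s (y (r + k%:Z)) = 0.
    move=> k hk; rewrite /Qmrs; apply/eqP; rewrite mulf_eq0; apply/orP; left.
    by apply/prodf_eq0; exists (Ordinal hk) => //=; rewrite subrr.
  have hP := hPi _ hx.
  have hi1 : (i.-1 < m)%N by lia.
  split.
    move: d1; rewrite /Ddag (q0 _ hi1) (q0 _ hi) subrr mul0r oppr0.
    move/esym/eqP; rewrite !mulf_eq0 invr_eq0 (negbTE hX) (negbTE hP) /= orbF.
    by move/eqP.
  move: d2; rewrite /Mdag (q0 _ hi1) (q0 _ hi) addr0 mul0r.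
  move/esym/eqP; rewrite !mulf_eq0 invr_eq0 (negbTE hP) /= orbF.
  by move/eqP.
pose rs := [seq x (r + i%:Z) | i <- iota 1 m.-1].
have hu : uniq rs.
  by rewrite map_inj_uniq ?iota_uniq // => i j /xinj /addrI [].
have hallN : all (root N) rs.
  apply/allP => z /mapP [i]; rewrite mem_iota => /andP [h1 h2] ->.
  by rewrite /root (hroot i h1 _).1 //; lia.
have hallM : all (root M) rs.
  apply/allP => z /mapP [i]; rewrite mem_iota => /andP [h1 h2] ->.
  by rewrite /root (hroot i h1 _).2 //; lia.
have hprod : forall t, (\prod_(z <- rs) ('X - z%:P)).[t] =
    \prod_(1 <= i < m) (t - x (r + i%:Z)).
  move=> t; rewrite horner_prod big_map /index_iota subn1.
  by apply: eq_bigr => i _; rewrite hornerXsubC.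
have hsr : size rs = m.-1 by rewrite size_map size_iota.
have [qN [sqN eN]] : exists q : {poly R}, (size q <= 1)%N /\
    N = q * \prod_(z <- rs) ('X - z%:P).
  apply: factor_roots => //; rewrite hsr (leq_trans (size_Npoly _ _ _ _ _)) //.
  lia.
have [qM [sqM eM]] : exists q : {poly R}, (size q <= 3)%N /\
    M = q * \prod_(z <- rs) ('X - z%:P).
  apply: factor_roots => //; rewrite hsr (leq_trans (size_Mpoly _ _ _ _ _)) //.
  lia.
have [m1|m1] := eqVneq m 1%N; last first.
  exists qN`_0, qM; split => //; last by move=> h; rewrite h eqxx in m1.
  move=> t yp ym hX hne hB hx; have [d1 d2] := DM t yp ym hX hne hB hx.
  have eqN : qN.[t] = qN`_0 by rewrite {1}(size1_polyC sqN) hornerC.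
  rewrite d1 d2 eN eM !hornerM hprod eqN /ratfac.
  by split; ring.
subst m.
have hPj1 : Pj (fun k => x' (s + k%:Z)) 1 0 = 1.
  by rewrite /Pj big_pred0 // => k; case: k => [[|[|k]] hk].
have hA0 : A 0%N = y' s - y r.
  have hu1 : forall j, (j < 1)%N -> y' (s + 0%:Z) + 1 != y' (s + j%:Z).
    move=> j; rewrite ltnS leqn0 => /eqP ->.
    by rewrite -subr_eq0 (addrC _ 1) addrK oner_neq0.
  move: (hA _ hu1); rewrite !big_ord1 /= !addr0 (addrC _ 1) addrK !divr1 => h.
  by apply: (addrI 1); rewrite -h; ring.
have h2 : (2 : R) != 0 by rewrite pnatr_eq0.
have [_ _ _ hYs] := hgp s.
exists ((y' s - y r) / (Ypol c i2).[y' s]),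
  (((Ypol c i2).[y' s])^-1 *:
                 (Xpol c i0 + ((y r + y' s) / 2) *: Xpol c i1
                  + (y r * y' s) *: Xpol c i2)).
split => //.
  have sD : forall p q : {poly R}, (size p <= 3)%N -> (size q <= 3)%N ->
      (size ((p + q)%R) <= 3)%N.
    by move=> p q hp hq; rewrite (leq_trans (size_polyD _ _)) // geq_max hp hq.
  have sZ : forall (k : R) (p : {poly R}), (size p <= 3)%N -> (size ((k *: p)%R) <= 3)%N.
    by move=> k p hp; rewrite (leq_trans (size_scale_leq _ _)).
  apply sZ; apply sD; first apply sD.
  - exact: size_Xpol.
  - by apply sZ; exact: size_Xpol.
  - by apply sZ; exact: size_Xpol.
move=> t yp ym hX hne hB hx; have [d1 d2] := DM t yp ym hX hne hB hx.
have hPi2 : \prod_(k < 2) (t - x' (s + k%:Z)) = (t - x' s) * (t - x' (s + 1)).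
  by rewrite big_ord_recr big_ord1 /= addr0.
have key : (Ypol c i2).[y' s] * ((t - x' s) * (t - x' (s + 1))) =
    (Xpol c i0).[t] + (Xpol c i1).[t] * y' s + (Xpol c i2).[t] * y' s ^+ 2.
  have := hF t 0%N isT; rewrite addr0 bqF_expand => ->; ring.
have hP := hPi t hx.
rewrite /ratfac big_geq // d1 d2.
split.
  rewrite /N /Npoly big_ord1 hornerZ hPj1 hornerC /= addr0 hA0.
  by field; rewrite hP hYs.
have eM1 : M.[t] = ((Ypol c i2).[y' s]^-1 *:
                 (Xpol c i0 + ((y r + y' s) / 2) *: Xpol c i1
                  + (y r * y' s) *: Xpol c i2)).[t].
  rewrite /M /Mpoly big_ord1 hPj1 mulr1 hornerD /PiP horner_prod.
  have -> : \prod_(k < 2) ('X - (x' (s + k%:Z))%:P).[t] =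
      (t - x' s) * (t - x' (s + 1)).
    by rewrite big_ord_recr big_ord1 /= !hornerXsubC addr0.
  rewrite !hornerE /= ?addr0 hA0.
  have -> : (t - x' s) * (t - x' (s + 1)) =
    ((Xpol c i0).[t] + (Xpol c i1).[t] * y' s + (Xpol c i2).[t] * y' s ^+ 2)
      / (Ypol c i2).[y' s].
    by rewrite -key; field.
  by field.
by rewrite eM1; field; rewrite hP.
Qed.
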